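(* For every integer $t\ge 2$, with $n:=2^{t-2}$, the Erdős–Szekeres construction of $n$ points can be realized with integer coordinates: there is an Erdős–Szekeres construction for $t$, in general position, all of whose points have integer coordinates and lie in an axis-parallel square of side length $O(n^2(\log_2 n)^3)$ (as $t\to\infty$).
   Context: For finite point sets $X,Y$ in the plane, $X$ is high above $Y$ if every line determined by two points of $X$ lies strictly above every point of $Y$, and every line determined by two points of $Y$ lies strictly below every point of $X$. For positive integers $k,l$, an $S_{k,l}$-set is defined recursively: if $k\le 2$ or $l\le 2$ it is a single point; otherwise it is a set $L\cup R$ where $L$ is an $S_{k-1,l}$-set, $R$ is an $S_{k,l-1}$-set, every point of $R$ lies strictly to the right of every point of $L$, and $R$ is high above $L$. (An $S_{k,l}$-set has $\binom{k+l-4}{k-2}$ points.) An Erdős–Szekeres construction for $t$ is a point set $\bigcup_{i=0}^{t-2}A_i$, where each $A_i$ is an $S_{t-i,i+2}$-set, such that: for $i<j$ every point of $A_i$ has smaller $x$-coordinate than every point of $A_j$; every line through a point of $A_i$ and a point of $A_j$ with $i\ne j$ has negative slope; and for $0\le i<j<k\le t-2$ and any $p_i\in A_i$, $p_j\in A_j$, $p_k\in A_k$, the triple $(p_i,p_j,p_k)$ is a right (clockwise) turn. It has $2^{t-2}$ points. *)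

(* Defs.v *)
From mathcomp Require Import all_boot all_order all_algebra.
Set Implicit Arguments. Unset Strict Implicit. Unset Printing Implicit Defensive.
Import Order.TTheory GRing.Theory Num.Theory.
Local Open Scope ring_scope.

Definition pt := (int * int)%type.
Definition px (p : pt) : int := p.1.
Definition py (p : pt) : int := p.2.

(* cross product det(q - p, r - p); > 0 left turn, < 0 right (clockwise) turn *)
Definition orient (p q r : pt) : int :=
  (px q - px p) * (py r - py p) - (py q - py p) * (px r - px p).

(* For px p < px q this is exactly: the y-value of line pq at abscissa px r
   exceeds py r.  A vertical line (px p = px q) is above no point. *)
Definition line_above (p q r : pt) : Prop :=
  - orient p q r * (px q - px p) > 0.

Definition line_below (p q r : pt) : Prop :=
  orient p q r * (px q - px p) > 0.

Definition high_above (X Y : seq pt) : Prop :=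
  (forall p q r, p \in X -> q \in X -> p != q -> r \in Y -> line_above p q r) /\
  (forall p q r, p \in Y -> q \in Y -> p != q -> r \in X -> line_below p q r).

(* S_{k,l}-sets (a set is represented by a sequence listing its points) *)
Inductive S_set : nat -> nat -> seq pt -> Prop :=
| S_base (k l : nat) (p : pt) : (k <= 2)%N \/ (l <= 2)%N -> S_set k l [:: p]
| S_step (k l : nat) (L R : seq pt) :
    (2 < k)%N -> (2 < l)%N ->
    S_set k.-1 l L -> S_set k l.-1 R ->
    (forall p q, p \in L -> q \in R -> px p < px q) ->
    high_above R L ->
    S_set k l (L ++ R).

Definition right_turn (p q r : pt) : Prop := orient p q r < 0.

Definition neg_slope (p q : pt) : Prop := (py q - py p) * (px q - px p) < 0.

Definition ES_construction (t : nat) (A : nat -> seq pt) : Prop :=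
  [/\ forall i, (i <= t - 2)%N -> S_set (t - i) (i + 2) (A i),
      forall i j p q, (i < j)%N -> (j <= t - 2)%N -> p \in A i -> q \in A j ->
        px p < px q /\ neg_slope p q &
      forall i j k p q r, (i < j)%N -> (j < k)%N -> (k <= t - 2)%N ->
        p \in A i -> q \in A j -> r \in A k -> right_turn p q r].

Definition ES_points (t : nat) (A : nat -> seq pt) : seq pt :=
  flatten [seq A i | i <- iota 0 (t - 1)].

Definition general_position (P : seq pt) : Prop :=
  forall p q r, p \in P -> q \in P -> r \in P ->
    p != q -> q != r -> p != r -> orient p q r != 0.

Definition in_square (P : seq pt) (s : int) : Prop :=
  exists x0 y0 : int, forall p, p \in P ->
    [/\ x0 <= px p, px p <= x0 + s, y0 <= py p & py p <= y0 + s].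

(* Main.v *)
Require Import Defs.
From mathcomp Require Import all_boot all_order all_algebra.
From mathcomp Require Import ring lra zify.
Import Order.TTheory GRing.Theory Num.Theory.
Set Implicit Arguments. Unset Strict Implicit.
Local Open Scope ring_scope.

Definition aff (a b c : int) (p : pt) : pt := (p.1 + a, p.2 + b * p.1 + c).

Lemma orient_aff a b c p q r :
  orient (aff a b c p) (aff a b c q) (aff a b c r) = orient p q r.
Proof. rewrite /orient /aff /px /py /=. ring. Qed.

Lemma px_aff a b c p : px (aff a b c p) = px p + a.
Proof. by []. Qed.

Lemma aff_inj a b c : injective (aff a b c).
Proof.
case=> x1 y1 [x2 y2]; rewrite /aff /= => [[h1 h2]].
have ex : x1 = x2 by move: h1 => /addIr.
by subst x2; move: h2 => /addIr /addIr ->.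
Qed.

Lemma aff_neq a b c p q : aff a b c p != aff a b c q -> p != q.
Proof. by apply: contra => /eqP ->. Qed.

Lemma line_above_aff a b c p q r :
  line_above (aff a b c p) (aff a b c q) (aff a b c r) <-> line_above p q r.
Proof.
rewrite /line_above orient_aff !px_aff.
by have -> : px q + a - (px p + a) = px q - px p by ring.
Qed.

Lemma line_below_aff a b c p q r :
  line_below (aff a b c p) (aff a b c q) (aff a b c r) <-> line_below p q r.
Proof.
rewrite /line_below orient_aff !px_aff.
by have -> : px q + a - (px p + a) = px q - px p by ring.
Qed.

Lemma S_set_aff a b c k l P : S_set k l P -> S_set k l (map (aff a b c) P).
Proof.
elim=> {k l P} [k l p h | k l L R hk hl _ IHL _ IHR hx [h1 h2]].
  by apply: S_base.
rewrite map_cat; apply: S_step => //.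
- move=> p q /mapP [p0 hp0 ->] /mapP [q0 hq0 ->]; rewrite !px_aff.
  by rewrite ltrD2r; apply: hx.
- split.
  + move=> p q r /mapP [p0 hp0 ->] /mapP [q0 hq0 ->] hn /mapP [r0 hr0 ->].
    by apply/line_above_aff; apply: h1 => //; apply: aff_neq hn.
  + move=> p q r /mapP [p0 hp0 ->] /mapP [q0 hq0 ->] hn /mapP [r0 hr0 ->].
    by apply/line_below_aff; apply: h2 => //; apply: aff_neq hn.
Qed.

Lemma orient_swap12 p q r : orient q p r = - orient p q r.
Proof. rewrite /orient; ring. Qed.
Lemma orient_swap23 p q r : orient p r q = - orient p q r.
Proof. rewrite /orient; ring. Qed.
Lemma orient_cyc p q r : orient q r p = orient p q r.
Proof. rewrite /orient; ring. Qed.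

Lemma above_neq p q r : line_above p q r -> orient p q r != 0.
Proof. by rewrite /line_above; apply: contraTneq => ->; rewrite oppr0 mul0r ltxx. Qed.
Lemma below_neq p q r : line_below p q r -> orient p q r != 0.
Proof. by rewrite /line_below; apply: contraTneq => ->; rewrite mul0r ltxx. Qed.

Lemma neq_swap12 p q r : orient q p r != 0 -> orient p q r != 0.
Proof. by rewrite orient_swap12 oppr_eq0. Qed.
Lemma neq_swap23 p q r : orient p r q != 0 -> orient p q r != 0.
Proof. by rewrite orient_swap23 oppr_eq0. Qed.
Lemma neq_cyc p q r : orient q r p != 0 -> orient p q r != 0.
Proof. by rewrite orient_cyc. Qed.

Lemma S_set_gp k l P : S_set k l P ->
  forall p q r, p \in P -> q \in P -> r \in P ->
    p != q -> q != r -> p != r -> orient p q r != 0.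
Proof.
elim=> {k l P} [k l p0 _ | k l L R _ _ _ IHL _ IHR _ [h1 h2]] p q r.
  by rewrite !inE => /eqP -> /eqP -> ; rewrite eqxx.
rewrite !mem_cat => hp hq hr npq nqr npr.
case/orP: hp => hp; case/orP: hq => hq; case/orP: hr => hr.
- exact: IHL.
- by apply: below_neq; apply: h2.
- by apply: neq_swap23; apply: below_neq; apply: h2.
- by apply: neq_cyc; apply: above_neq; apply: h1.
- by apply: neq_cyc; apply: below_neq; apply: h2.
- by apply: neq_swap23; apply: above_neq; apply: h1.
- by apply: above_neq; apply: h1.
- exact: IHR.
Qed.

Lemma above_key (w xp yp xq yq xr yr : int) :
  0 <= xp <= w -> 0 <= yp <= w -> 0 <= xq <= w -> 0 <= yq <= w ->
  0 <= xr <= w -> 0 <= yr <= w -> xq != xp ->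
  (xq - xp) * (yq - yp) <= 2 * (xq - xp) ^+ 2 ->
  line_above (xp + (3 * w + 1), yp + 0 * xp + (9 * w + 3))
             (xq + (3 * w + 1), yq + 0 * xq + (9 * w + 3)) (xr, yr).
Proof.
move=> /andP[? ?] /andP[? ?] /andP[? ?] /andP[? ?] /andP[? ?] /andP[? ?] hne hpr.
rewrite /line_above /orient /px /py /=.
set dx := xq - xp.
have h1 : 0 < dx ^+ 2.
  by rewrite exprn_even_gt0 // subr_eq0.
have h2 : 0 <= (2 * dx ^+ 2 - dx * (yq - yp)) * ((xp + (3 * w + 1)) - xr).
  apply: mulr_ge0; lia.
have -> : - ((xq + (3 * w + 1) - (xp + (3 * w + 1))) * (yr - (yp + 0 * xp + (9 * w + 3))) -
   (yq + 0 * xq + (9 * w + 3) - (yp + 0 * xp + (9 * w + 3))) * (xr - (xp + (3 * w + 1)))) *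
   (xq + (3 * w + 1) - (xp + (3 * w + 1))) =
   dx ^+ 2 * (yp + 9 * w + 3 - yr - 2 * (xp + 3 * w + 1 - xr)) +
   (2 * dx ^+ 2 - dx * (yq - yp)) * ((xp + (3 * w + 1)) - xr) by rewrite /dx; ring.
have h3 : 0 < dx ^+ 2 * (yp + 9 * w + 3 - yr - 2 * (xp + 3 * w + 1 - xr)).
  apply: mulr_gt0 => //; lia.
lra.
Qed.

Lemma below_key (w xp yp xq yq xr yr : int) :
  0 <= xp <= w -> 0 <= yp <= w -> 0 <= xq <= w -> 0 <= yq <= w ->
  0 <= xr <= w -> 0 <= yr <= w -> xq != xp ->
  (xq - xp) * (yq - yp) <= 2 * (xq - xp) ^+ 2 ->
  line_below (xp, yp) (xq, yq) (xr + (3 * w + 1), yr + 0 * xr + (9 * w + 3)).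
Proof.
move=> /andP[? ?] /andP[? ?] /andP[? ?] /andP[? ?] /andP[? ?] /andP[? ?] hne hpr.
rewrite /line_below /orient /px /py /=.
set dx := xq - xp.
have h1 : 0 < dx ^+ 2.
  by rewrite exprn_even_gt0 // subr_eq0.
have h2 : 0 <= (2 * dx ^+ 2 - dx * (yq - yp)) * ((xr + (3 * w + 1)) - xp).
  apply: mulr_ge0; lia.
have -> : ((xq - xp) * (yr + 0 * xr + (9 * w + 3) - yp) - (yq - yp) * (xr + (3 * w + 1) - xp)) * (xq - xp) =
   dx ^+ 2 * (yr + 9 * w + 3 - yp - 2 * (xr + 3 * w + 1 - xp)) +
   (2 * dx ^+ 2 - dx * (yq - yp)) * ((xr + (3 * w + 1)) - xp) by rewrite /dx; ring.
have h3 : 0 < dx ^+ 2 * (yr + 9 * w + 3 - yp - 2 * (xr + 3 * w + 1 - xp)).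
  apply: mulr_gt0 => //; lia.
lra.
Qed.

Fixpoint wm (m : nat) : nat := if m is m'.+1 then (4 * wm m' + 1)%N else 0%N.

Definition comb (w : int) (L R : seq pt) : seq pt :=
  map (aff 0 (-3) (3 * w)) (L ++ map (aff (3 * w + 1) 0 (9 * w + 3)) R).

Fixpoint bld (m k l : nat) : seq pt :=
  if m is m'.+1 then
    if (2 < k)%N && (2 < l)%N then comb (wm m')%:Z (bld m' k.-1 l) (bld m' k l.-1)
    else [:: (0, 0)]
  else [:: (0, 0)].

Definition Inv (m : nat) (P : seq pt) : Prop :=
  [/\ forall p, p \in P -> 0 <= px p <= (wm m)%:Z /\ 0 <= py p <= (wm m)%:Z,
      forall p q, p \in P -> q \in P -> p != q -> px p != px q &
      forall p q, p \in P -> q \in P -> px p < px q ->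
         - (3 * m%:Z) * (px q - px p) <= py q - py p <= 2 * (px q - px p)].

Lemma Inv_pt m : Inv m [:: (0, 0)].
Proof.
split.
- by move=> p; rewrite inE => /eqP ->; rewrite /px /py /=; lia.
- by move=> p q; rewrite !inE => /eqP -> /eqP ->; rewrite eqxx.
- by move=> p q; rewrite !inE => /eqP -> /eqP ->; rewrite ltxx.
Qed.

Lemma slope_prod (P : seq pt) p q :
  (forall p q, p \in P -> q \in P -> px p < px q -> py q - py p <= 2 * (px q - px p)) ->
  p \in P -> q \in P ->
  (px q - px p) * (py q - py p) <= 2 * (px q - px p) ^+ 2.
Proof.
move=> hs hp hq.
case: (ltgtP (px p) (px q)) => h.
- have := hs _ _ hp hq h; nia.
- have := hs _ _ hq hp h; nia.
- by rewrite h subrr !mul0r expr0n /= mulr0.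
Qed.


Section Comb.
Variables (m : nat) (L R : seq pt).
Hypothesis (IL : Inv m L) (IR : Inv m R).
Let w : int := (wm m)%:Z.
Let g := aff (3 * w + 1) 0 (9 * w + 3).
Let f := aff 0 (-3) (3 * w).

Lemma w_ge0 : 0 <= w. Proof. by []. Qed.

Lemma comb_high : high_above (map g R) L.
Proof.
case: IL => bL dL sL; case: IR => bR dR sR.
split.
- move=> p q [xr yr] /mapP [[xp yp] hp0 ->] /mapP [[xq yq] hq0 ->] hn hr.
  have hpq := aff_neq hn.
  have dx : xq != xp by rewrite eq_sym; apply: (dR (xp, yp) (xq, yq)).
  have hprod := slope_prod (fun a b ha hb hl => proj2 (andP (sR a b ha hb hl))) hp0 hq0.
  have [hp1 hp2] := bR _ hp0; have [hq1 hq2] := bR _ hq0; have [hr1 hr2] := bL _ hr.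
  exact: above_key.
- move=> [xp yp] [xq yq] r hp0 hq0 hpq /mapP [[xr yr] hr ->].
  have dx : xq != xp by rewrite eq_sym; apply: (dL (xp, yp) (xq, yq)).
  have hprod := slope_prod (fun a b ha hb hl => proj2 (andP (sL a b ha hb hl))) hp0 hq0.
  have [hp1 hp2] := bL _ hp0; have [hq1 hq2] := bL _ hq0; have [hr1 hr2] := bR _ hr.
  exact: below_key.
Qed.

Lemma comb_xsep p q : p \in L -> q \in map g R -> px p < px q.
Proof.
case: IL => bL _ _; case: IR => bR _ _.
move=> hp /mapP [q0 hq ->]; have [h1 _] := bL _ hp; have [h2 _] := bR _ hq.
rewrite px_aff; lia.
Qed.

Lemma pre_info u : u \in L ++ map g R ->
  (u \in L /\ 0 <= px u <= w /\ 0 <= py u <= w) \/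
  (exists2 u0, u0 \in R & u = g u0 /\ 3 * w + 1 <= px u <= 4 * w + 1 /\
        9 * w + 3 <= py u <= 10 * w + 3).
Proof.
case: IL => bL _ _; case: IR => bR _ _.
rewrite mem_cat => /orP [h | /mapP [u0 h eu]].
  by left; split => //; apply: bL.
right; exists u0 => //; split => //; rewrite eu.
have [h1 h2] := bR _ h; rewrite /g /aff /px /py /= in h1 h2 *; lia.
Qed.

Lemma comb_Inv : Inv m.+1 (comb w L R).
Proof.
have ew : (wm m.+1)%:Z = 4 * w + 1 by rewrite /= PoszD PoszM.
case: (IL) => bL dL sL; case: (IR) => bR dR sR.
split.
- move=> p /mapP [u hu ->]; rewrite ew /f /aff /px /py /=.
  case: (pre_info hu) => [[_ [h1 h2]] | [u0 _ [_ [h1 h2]]]];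
    rewrite /px /py in h1 h2; lia.
- move=> p q /mapP [u hu ->] /mapP [v hv ->] hn; rewrite !px_aff.
  have huv := aff_neq hn.
  suff : px u != px v by apply: contra => /eqP /addIr ->.
  case: (pre_info hu) => [[hu1 [h1 _]] | [u0 hu0 [eu [h1 _]]]];
  case: (pre_info hv) => [[hv1 [h2 _]] | [v0 hv0 [ev [h2 _]]]].
  + exact: dL.
  + apply/eqP; lia.
  + apply/eqP; lia.
  + rewrite eu ev !px_aff; apply/negP => /eqP /addIr /eqP.
    apply/negP; apply: dR => //; apply: contraNneq huv => e; by rewrite eu ev e.
- move=> p q /mapP [u hu ->] /mapP [v hv ->]; rewrite /f /aff /px /py /=.
  rewrite !addr0 => hlt.
  have e1 : (m.+1%:Z) = m%:Z + 1 by rewrite -addn1 PoszD.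
  rewrite e1.
  case: (pre_info hu) => [[hu1 [h1 h1']] | [u0 hu0 [eu [h1 h1']]]];
  case: (pre_info hv) => [[hv1 [h2 h2']] | [v0 hv0 [ev [h2 h2']]]];
  rewrite /px /py in h1 h1' h2 h2'.
  + have := sL _ _ hu1 hv1 hlt; rewrite /px /py; nia.
  + have hm : 0 <= m%:Z by [].
    nia.
  + lia.
  + have exu : u.1 = u0.1 + (3 * w + 1) by rewrite eu.
    have eyu : u.2 = u0.2 + (9 * w + 3) by rewrite eu /g /aff /=; ring.
    have exv : v.1 = v0.1 + (3 * w + 1) by rewrite ev.
    have eyv : v.2 = v0.2 + (9 * w + 3) by rewrite ev /g /aff /=; ring.
    have hlt0 : px u0 < px v0 by rewrite /px -(ltrD2r (3 * w + 1)) -exu -exv.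
    have := sR _ _ hu0 hv0 hlt0; move: hlt0; rewrite /px /py exu eyu exv eyv.
    move: (u0.1 : int) (u0.2 : int) (v0.1 : int) (v0.2 : int) => a b c d.
    have hm : 0 <= m%:Z by [].
    move: (m%:Z) hm => mm hm. nia.
Qed.
End Comb.

Lemma bld_ok m k l : (k + l = m + 4)%N -> S_set k l (bld m k l) /\ Inv m (bld m k l).
Proof.
elim: m k l => [|m IH] k l hkl /=.
  split; last exact: Inv_pt.
  by apply: S_base; lia.
case: ifP => hc; last first.
  split; last exact: Inv_pt.
  apply: S_base; move/negbT: hc; rewrite negb_and -!leqNgt; lia.
move/andP: hc => [hk hl].
have [SL IL] := IH k.-1 l ltac:(lia).
have [SR IR] := IH k l.-1 ltac:(lia).
split; last exact: comb_Inv.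
apply: S_set_aff; apply: S_step => //.
- exact: S_set_aff.
- by move=> p q hp hq; apply: (comb_xsep IL IR).
- exact: comb_high.
Qed.

Lemma orient_alt p q r :
  orient p q r = (px q - px p) * (py r - py q) - (py q - py p) * (px r - px q).
Proof. rewrite /orient; ring. Qed.

Lemma cross_arith (m i j W P xp yp xq yq : int) :
  0 <= m -> 0 <= W -> 0 <= i -> i < j -> j <= m ->
  (3 * m + 1) * W + (4 * m + 2) * W < 2 * P ->
  i * P <= xp <= i * P + W ->
  - (2 * P * i * (i + 1)) <= yp <= - (2 * P * i * (i + 1)) + (3 * m + 1) * W ->
  j * P <= xq <= j * P + W ->
  - (2 * P * j * (j + 1)) <= yq <= - (2 * P * j * (j + 1)) + (3 * m + 1) * W ->
  [/\ xp < xq, yq - yp < - (4 * i + 2) * (xq - xp) &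
      - (4 * j + 2) * (xq - xp) < yq - yp].
Proof.
move=> hm hW hi hij hjm hkey /andP[hx1 hx2] /andP[hy1 hy2] /andP[hx3 hx4] /andP[hy3 hy4].
have h0 : 0 <= (3 * m + 1) * W by apply: mulr_ge0; lia.
have h0' : 0 <= (4 * m + 2) * W by apply: mulr_ge0; lia.
have hP : 0 < P by lia.
have haP : 2 * P <= 2 * (j - i) * P.
  have : 0 <= 2 * (j - i - 1) * P by apply: mulr_ge0; [lia | lia].
  lia.
have hPW : W < P.
  have : W <= (4 * m + 2) * W.
    have : 0 <= (4 * m + 1) * W by apply: mulr_ge0; lia.
    lia.
  lia.
have hjP : 0 <= (j - i - 1) * P by apply: mulr_ge0; lia.
split.
- lia.
- have e1 : 2 * P * (j - i) * (2 * i + 2) <= 2 * P * (j - i) * (i + j + 1).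
    apply: ler_wpM2l; [apply: mulr_ge0; lia | lia].
  have e2 : (4 * i + 2) * (xq - xp) <= (4 * i + 2) * ((j - i) * P + W).
    apply: ler_wpM2l; lia.
  have e3 : (4 * i + 2) * W <= (4 * m + 2) * W by apply: ler_wpM2r; lia.
  lia.
- have e1 : 2 * P * (j - i) * (i + j + 1) <= 2 * P * (j - i) * (2 * j).
    apply: ler_wpM2l; [apply: mulr_ge0; lia | lia].
  have e2 : (4 * j + 2) * ((j - i) * P - W) <= (4 * j + 2) * (xq - xp).
    apply: ler_wpM2l; lia.
  have e3 : (4 * j + 2) * W <= (4 * m + 2) * W by apply: ler_wpM2r; lia.
  lia.
Qed.

Section ES.
Variable t : nat.
Hypothesis ht : (2 <= t)%N.
Let m : nat := (t - 2)%N.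
Let W : int := (wm m)%:Z.
Let P : int := 4 * (m%:Z + 2) * W + 1.
Let F (i : nat) : int := 2 * P * i%:Z * (i%:Z + 1).
Let Hg : int := (3 * m%:Z + 1) * W.

Definition ESA_ (i : nat) : seq pt :=
  map (aff (i%:Z * P) (3 * m%:Z) (- F i)) (bld m (t - i) (i + 2)).

Lemma grp_ok i : (i <= m)%N ->
  S_set (t - i) (i + 2) (bld m (t - i) (i + 2)) /\ Inv m (bld m (t - i) (i + 2)).
Proof. move=> hi; apply: bld_ok; rewrite /m; lia. Qed.

Lemma grp_bounds i p : (i <= m)%N -> p \in ESA_ i ->
  i%:Z * P <= px p <= i%:Z * P + W /\ - F i <= py p <= - F i + Hg.
Proof.
move=> hi /mapP [[x0 y0] hp ->].
have [_ [bI _ _]] := grp_ok hi.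
have [h1 h2] := bI _ hp.
rewrite /px /py /= in h1 h2 *.
have hm : 0 <= m%:Z by [].
have e : 3 * m%:Z * x0 <= 3 * m%:Z * W by apply: ler_wpM2l; lia.
have e' : 0 <= 3 * m%:Z * x0 by apply: mulr_ge0; lia.
rewrite /Hg; split; lia.
Qed.

Lemma grp_mono i p q : (i <= m)%N -> p \in ESA_ i -> q \in ESA_ i ->
  px p < px q -> py p <= py q.
Proof.
move=> hi /mapP [[x0 y0] hp ->] /mapP [[x1 y1] hq ->].
have [_ [_ _ sI]] := grp_ok hi.
rewrite /px /py /= => hlt.
have hlt0 : x0 < x1 by lia.
have := sI _ _ hp hq hlt0; rewrite /px /py /= => /andP [h1 _].
lia.
Qed.

Lemma grp_dist i p q : (i <= m)%N -> p \in ESA_ i -> q \in ESA_ i ->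
  p != q -> px p != px q.
Proof.
move=> hi /mapP [p0 hp ->] /mapP [q0 hq ->] hn.
have [_ [_ dI _]] := grp_ok hi.
rewrite !px_aff; apply/negP => /eqP /addIr /eqP; apply/negP.
by apply: dI => //; apply: aff_neq hn.
Qed.

Lemma grp_cross i j p q : (i < j)%N -> (j <= m)%N -> p \in ESA_ i -> q \in ESA_ j ->
  [/\ px p < px q, py q - py p < - (4 * i%:Z + 2) * (px q - px p) &
      - (4 * j%:Z + 2) * (px q - px p) < py q - py p].
Proof.
move=> hij hjm hp hq.
have [hx1 hy1] := grp_bounds (ltnW (leq_ltn_trans (leqnn i) (leq_trans hij hjm))) hp.
have [hx2 hy2] := grp_bounds hjm hq.
apply: (@cross_arith m%:Z i%:Z j%:Z W P) => //.
all: lia.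
Qed.

Lemma orient_neg_arith (c dx1 dy1 dx2 dy2 : int) :
  0 < dx1 -> 0 < dx2 -> - c * dx1 < dy1 -> dy2 < - c * dx2 ->
  dx1 * dy2 - dy1 * dx2 < 0.
Proof.
move=> h1 h2 h3 h4.
have e1 : dx1 * dy2 < dx1 * (- c * dx2) by rewrite ltr_pM2l.
have e2 : (- c * dx1) * dx2 < dy1 * dx2 by rewrite ltr_pM2r.
have e3 : dx1 * (- c * dx2) = (- c * dx1) * dx2 by ring.
lra.
Qed.

Lemma grp_triple i j k p q r : (i < j)%N -> (j < k)%N -> (k <= m)%N ->
  p \in ESA_ i -> q \in ESA_ j -> r \in ESA_ k -> orient p q r < 0.
Proof.
move=> hij hjk hkm hp hq hr.
have [a1 _ a3] := grp_cross hij (ltnW (leq_ltn_trans (leqnn j) (leq_trans hjk hkm))) hp hq.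
have [b1 b2 _] := grp_cross hjk hkm hq hr.
rewrite orient_alt.
apply: (@orient_neg_arith (4 * j%:Z + 2)); lra.
Qed.

Lemma grp_two i j a b c : (i <= m)%N -> (j <= m)%N -> i != j ->
  a \in ESA_ i -> b \in ESA_ i -> c \in ESA_ j -> a != b -> orient a b c != 0.
Proof.
move=> him hjm hij.
wlog hab : a b / px a < px b.
  move=> H ha hb hc hn.
  have := grp_dist him ha hb hn.
  case: (ltgtP (px a) (px b)) => // h _.
  - exact: H.
  - apply: neq_swap12; apply: H => //; by rewrite eq_sym.
move=> ha hb hc hn.
have hm := grp_mono him ha hb hab.
case: (ltgtP i j) hij => // h _.
- have [c1 c2 _] := grp_cross h hjm hb hc.
  have : 0 <= 4 * i%:Z + 2 by [].
  rewrite orient_alt; move=> h4.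
  have hdx : 0 < px c - px b by lra.
  have : py c - py b < 0.
    have : 0 <= (4 * i%:Z + 2) * (px c - px b) by apply: mulr_ge0; lra.
    lra.
  move=> hdy.
  have e1 : (px b - px a) * (py c - py b) < 0 by rewrite pmulr_rlt0 // subr_gt0.
  have e2 : 0 <= (py b - py a) * (px c - px b) by apply: mulr_ge0; lra.
  apply/negP => /eqP; lra.
- have [c1 c2 _] := grp_cross h him hc ha.
  rewrite -orient_cyc orient_alt.
  have h4 : 0 <= 4 * j%:Z + 2 by [].
  have : py a - py c < 0.
    have : 0 <= (4 * j%:Z + 2) * (px a - px c) by apply: mulr_ge0; lra.
    lra.
  move=> hdy.
  have e1 : (px b - px a) * (py a - py c) < 0 by rewrite pmulr_rlt0 // subr_gt0.
  have e2 : 0 <= (px a - px c) * (py b - py a) by apply: mulr_ge0; lra.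
  apply/negP => /eqP; lra.
Qed.

Lemma ES_mem p : p \in ES_points t ESA_ -> exists2 i, (i <= m)%N & p \in ESA_ i.
Proof.
rewrite /ES_points => /flatten_mapP [i hi hp].
exists i => //; move: hi; rewrite mem_iota /m; lia.
Qed.

Lemma ES_gp : general_position (ES_points t ESA_).
Proof.
move=> p q r hp hq hr npq nqr npr.
have [i hi hpi] := ES_mem hp.
have [j hj hqj] := ES_mem hq.
have [k hk hrk] := ES_mem hr.
case: (eqVneq i j) => eij.
  subst j; case: (eqVneq i k) => eik.
    subst k; have [S _] := grp_ok hi.
    exact: (S_set_gp (S_set_aff (i%:Z * P) (3 * m%:Z) (- F i) S) hpi hqj hrk).
  exact: (grp_two hi hk eik).
case: (eqVneq j k) => ejk.
  subst k; apply: neq_cyc; apply: (grp_two hj hi) => //; by rewrite eq_sym.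
case: (eqVneq i k) => eik.
  subst k; apply: neq_swap23; exact: (grp_two hi hj eij).
case: (ltgtP i j) eij => // h1 _; case: (ltgtP j k) ejk => // h2 _;
  case: (ltgtP i k) eik => // h3 _.
- exact: ltr0_neq0 (grp_triple h1 h2 hk hpi hqj hrk).
- exfalso; lia.
- apply: neq_swap23; exact: ltr0_neq0 (grp_triple h3 h2 hj hpi hrk hqj).
- rewrite (orient_cyc r p q); exact: ltr0_neq0 (grp_triple h3 h1 hj hrk hpi hqj).
- apply: neq_swap12; exact: ltr0_neq0 (grp_triple h1 h3 hk hqj hpi hrk).
- apply: neq_cyc; exact: ltr0_neq0 (grp_triple h2 h3 hi hqj hrk hpi).
- exfalso; lia.
- apply: neq_swap12; rewrite (orient_cyc r q p); exact: ltr0_neq0 (grp_triple h2 h1 hi hrk hqj hpi).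
Qed.


Lemma ES_constr : ES_construction t ESA_.
Proof.
split.
- move=> i hi; have [S _] := grp_ok hi; exact: S_set_aff.
- move=> i j p q hij hjm hp hq.
  have [c1 c2 _] := grp_cross hij hjm hp hq; split => //.
  rewrite /neg_slope pmulr_llt0 ?subr_gt0 //.
  have : 0 <= (4 * i%:Z + 2) * (px q - px p) by apply: mulr_ge0; lia.
  lra.
- move=> i j k p q r hij hjk hkm hp hq hr; exact: grp_triple hij hjk hkm hp hq hr.
Qed.

Definition side : int := F m + Hg + m%:Z * P + W.

Lemma ES_square : in_square (ES_points t ESA_) side.
Proof.
exists 0, (- F m) => p hp.
have [i hi hpi] := ES_mem hp.
have [hx hy] := grp_bounds hi hpi.
have hW : 0 <= W by [].
have hP : 0 <= P by rewrite /P; apply: addr_ge0 => //; apply: mulr_ge0 => //; apply: mulr_ge0.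
have him : i%:Z <= m%:Z by rewrite lez_nat.
have hi0 : 0 <= i%:Z by [].
have e1 : i%:Z * P <= m%:Z * P by apply: ler_wpM2r.
have e2' : i%:Z * (i%:Z + 1) <= m%:Z * (m%:Z + 1) by nia.
have e2 : F i <= F m.
  rewrite /F -!mulrA; apply: ler_wpM2l => //; apply: ler_wpM2l => //.
have e3 : 0 <= F i by rewrite /F; apply: mulr_ge0; [apply: mulr_ge0; [apply: mulr_ge0|]|apply: addr_ge0].
have e4 : 0 <= Hg by rewrite /Hg; apply: mulr_ge0 => //; apply: addr_ge0 => //; apply: mulr_ge0.
have e0 : 0 <= i%:Z * P by apply: mulr_ge0.
rewrite /side; split; lra.
Qed.
End ES.

Lemma wm4 m : (3 * wm m + 1 = 4 ^ m)%N.
Proof. elim: m => [|m IH] //=; rewrite expnS -IH; lia. Qed.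

Lemma side_arith (m w P : int) : 1 <= m -> 0 <= w ->
  P = 4 * (m + 2) * w + 1 ->
  2 * P * m * (m + 1) + (3 * m + 1) * w + m * P + w <= 100 * (3 * w + 1) * (m * m * m).
Proof.
move=> hm hw eP.
have hP : P <= 4 * m * (3 * w + 1) by rewrite eP; nia.
have hP0 : 0 <= P by rewrite eP; nia.
have h1 : 2 * P * m * (m + 1) <= 2 * (4 * m * (3 * w + 1)) * m * (2 * m).
  have : 0 <= m * (m + 1) by nia.
  have : m * (m + 1) <= m * (2 * m) by nia.
  nia.
have h2 : (3 * m + 1) * w <= m * m * m * (4 * (3 * w + 1)) by nia.
have h3 : m * P <= m * m * m * (4 * (3 * w + 1)) by nia.
have h4 : w <= m * m * m * (3 * w + 1) by nia.
nia.
Qed.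

Lemma side_bound t : (3 <= t)%N ->
  side t <= ((100 * (2 ^ (t - 2)) ^ 2 * (trunc_log 2 (2 ^ (t - 2))) ^ 3)%N)%:Z.
Proof.
move=> ht.
have e : ((2 ^ (t - 2)) ^ 2 = 4 ^ (t - 2))%N by rewrite -expnM mulnC expnM.
rewrite trunc_expnK // e -wm4.
rewrite (_ : ((t - 2) ^ 3 = (t - 2) * (t - 2) * (t - 2))%N); last first.
  by rewrite !expnS expn0 muln1 mulnA.
rewrite !PoszM PoszD PoszM.
rewrite /side.
apply: (@side_arith (t - 2)%N%:Z (wm (t - 2))%:Z) => //.
- have : (1 <= t - 2)%N by lia.
  by rewrite -lez_nat.
Qed.

Theorem theorem4 :
  exists (C T : nat), forall t : nat, (2 <= t)%N ->
    let n := (2 ^ (t - 2))%N in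
    exists A : nat -> seq pt, exists s : int,
      [/\ ES_construction t A,
          general_position (ES_points t A),
          in_square (ES_points t A) s &
          (T <= t)%N -> s <= ((C * n ^ 2 * (trunc_log 2 n) ^ 3)%N)%:Z].
Proof.
exists 100%N, 3%N => t ht n.
exists (ESA_ t), (side t); split.
- exact: ES_constr.
- exact: ES_gp.
- exact: ES_square.
- move=> h3; exact: side_bound.
Qed.
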